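(* Let $\alpha\in\mathbb{N}$, let $n\in\mathbb{N}$ with $3\nmid n$ and $n>6\alpha+3$, and let $\mathbb{S}=\langle 6,6\alpha+3,n\rangle$. Put $\beta_2=12\alpha+6$ and $\beta_3=3n$. Then (i) $F(\mathbb{S})=\frac{\beta_2+\beta_3}{2}-\frac{12-n}{2}$; (ii) $g(\mathbb{S})=\frac{\beta_2+\beta_3}{4}+\frac{n-10}{4}$.
   Context: $\mathbb{N}=\{0,1,2,\dots\}$. $\langle a_1,\dots,a_e\rangle$ is the set of $\mathbb{N}$-linear combinations of $a_1,\dots,a_e$. For a numerical semigroup $\mathbb{S}$, the Frobenius number $F(\mathbb{S})$ is the largest integer not in $\mathbb{S}$, and the genus $g(\mathbb{S})$ is the number of positive integers not in $\mathbb{S}$. *)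

(* Defs.v *)
From mathcomp Require Import all_boot all_order all_algebra.
Set Implicit Arguments. Unset Strict Implicit. Unset Printing Implicit Defensive.
Import Order.TTheory GRing.Theory Num.Theory.
Local Open Scope ring_scope.

Definition in_semigroup (gens : seq nat) (x : int) : Prop :=
  exists c : seq nat, size c = size gens /\
    x = ((\sum_(i < size gens) nth 0%N c i * nth 0%N gens i)%N)%:Z.

Definition is_frobenius (S : int -> Prop) (f : int) : Prop :=
  ~ S f /\ forall m : int, f < m -> S m.

Definition is_genus (S : int -> Prop) (g : nat) : Prop :=
  exists s : seq nat, uniq s /\
    (forall m : nat, m \in s <-> (0 < m)%N /\ ~ S m%:Z) /\ size s = g.

(* Main.v *)
Require Import Defs.
From mathcomp Require Import all_boot all_order all_algebra.
From mathcomp Require Import zify.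
From mathcomp Require Import lra.
Import Order.TTheory GRing.Theory Num.Theory.

Lemma count_refl (P : pred nat) f :
  count P (iota 0 f.+1) = count (fun x => P (f - x)) (iota 0 f.+1).
Proof.
elim: f P => [|f IH] P; first by [].
have E1 : iota 0 f.+2 = iota 0 f.+1 ++ [:: f.+1] by rewrite -addn1 iotaD.
have E2 : iota 0 f.+2 = 0 :: map (addn 1) (iota 0 f.+1) by rewrite -iotaDl.
have CC : forall (Q : pred nat) y s, count Q (y :: s) = Q y + count Q s by [].
rewrite [in LHS]E1 [in RHS]E2 count_cat [in RHS]CC count_map IH [count _ [:: _]]/= subn0 addn0 addnC.
congr (_ + _).
Qed.

Section S.
Variables a n : nat.
Definition memk (k x : nat) : bool :=
  (k * n <= x) && ((x - k * n) %% 3 == 0) &&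
  ((((x - k * n) %/ 3) %% 2 == 0) || (2 * a + 1 <= (x - k * n) %/ 3)).
Definition memb x := [|| memk 0 x, memk 1 x | memk 2 x].

Hypothesis H3 : ~~ (3 %| n).
Hypothesis Hn : 6 * a + 3 < n.

Let f := 2 * n + 6 * a - 3.

Lemma Aij i j x : i < 3 -> j < 3 -> x <= f -> memk i x -> memk j (f - x) -> False.
Proof.
move: H3 => /negP H3' Hi Hj Hx; rewrite /f in Hx *.
case: i Hi => [|[|[|i]]] // _; case: j Hj => [|[|[|j]]] // _;
rewrite /memk ?mul0n ?mul1n; lia.
Qed.

Lemma B0 x : x <= f -> x %% 3 = 0 -> ~~ memk 0 x -> memk 2 (f - x).
Proof. move: H3 => /negP H3' Hx; rewrite /f in Hx *; rewrite /memk !mul0n; lia. Qed.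
Lemma B1 x : x <= f -> x %% 3 = n %% 3 -> ~~ memk 1 x -> memk 1 (f - x).
Proof. move: H3 => /negP H3' Hx; rewrite /f in Hx *; rewrite /memk !mul1n; lia. Qed.
Lemma B2 x : x <= f -> x %% 3 = (2 * n) %% 3 -> ~~ memk 2 x -> memk 0 (f - x).
Proof. move: H3 => /negP H3' Hx; rewrite /f in Hx *; rewrite /memk !mul0n; lia. Qed.

Lemma memb_sym x : x <= f -> memb (f - x) = ~~ memb x.
Proof.
move=> Hx.
case Hm: (memb x) => /=.
  apply/negP => Hm'.
  move: Hm => /or3P [] Hi; move: Hm' => /or3P [] Hj;
  exact: (Aij _ _ _ _ _ Hx Hi Hj).
move: Hm => /negbT; rewrite /memb !negb_or => /and3P [N0 N1 N2].
have : [\/ x %% 3 = 0, x %% 3 = n %% 3 | x %% 3 = (2 * n) %% 3].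
  move: H3 => /negP H3'.
  have : x %% 3 = 0 \/ x %% 3 = n %% 3 \/ x %% 3 = (2 * n) %% 3 by lia.
  by case=> [|[]]; [constructor 1|constructor 2|constructor 3].
case=> Hr.
- by rewrite /memb (B0 _ Hx Hr N0) !orbT.
- by rewrite /memb (B1 _ Hx Hr N1) !orbT.
- by rewrite /memb (B2 _ Hx Hr N2).
Qed.

Lemma memb0 : memb 0.
Proof. by rewrite /memb /memk. Qed.

Lemma memb_f : ~~ memb f.
Proof. by have := memb_sym _ (leq0n f); rewrite subn0 memb0 => ->. Qed.

Lemma memb_big m : f < m -> memb m.
Proof.
move: H3 => /negP H3' Hm; rewrite /f in Hm.
have : m %% 3 = 0 \/ m %% 3 = n %% 3 \/ m %% 3 = (2 * n) %% 3 by lia.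
case=> [Hr|[Hr|Hr]]; rewrite /memb.
- have -> : memk 0 m by rewrite /memk; lia.
  by [].
- have -> : memk 1 m by rewrite /memk; lia.
  by rewrite orbT.
- have -> : memk 2 m by rewrite /memk; lia.
  by rewrite !orbT.
Qed.

Lemma memk_of c0 P Q k : k < 3 -> (P = 0 \/ 2 * a + 1 <= P) -> (Q = 0 \/ n <= Q) ->
  memk k (6 * c0 + 3 * P + 3 * Q + k * n).
Proof.
case: k => [|[|[|k]]] // _ HP HQ; rewrite /memk ?mul0n ?mul1n; lia.
Qed.

Lemma memk_wit k x : memk k x -> exists c0 c1, x = c0 * 6 + c1 * (6 * a + 3) + k * n.
Proof.
rewrite /memk; set y := (x - k * n) %/ 3 => /andP [/andP [H1 H2] H4].
case E: (y %% 2 == 0).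
  exists (y %/ 2), 0; lia.
rewrite E /= in H4.
exists ((y - (2 * a + 1)) %/ 2), 1; lia.
Qed.

Lemma in_semi_memb x :
  in_semigroup [:: 6; (6 * a + 3)%N; n] (Posz x) <-> memb x.
Proof.
split.
  case=> c [Hc]; rewrite !big_ord_recr big_ord0 /=.
  case: c Hc => [|c0 [|c1 [|c2 [|]]]] //= _ /eqP; rewrite eqz_nat => /eqP ->.
  set q := c2 %/ 3; set k := c2 %% 3.
  have Hc2 : c2 = q * 3 + k by rewrite /q /k -divn_eq.
  have Hk : k < 3 by rewrite /k ltn_mod.
  have HP : c1 * (2 * a + 1) = 0 \/ 2 * a + 1 <= c1 * (2 * a + 1).
    case: c1 => [|c1]; [by left|right; exact: leq_pmull].
  have HQ : q * n = 0 \/ n <= q * n.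
    case: q {Hc2} => [|q]; [by left|right; exact: leq_pmull].
  have E : 0 + c0 * 6 + c1 * (6 * a + 3) + c2 * n =
      6 * c0 + 3 * (c1 * (2 * a + 1)) + 3 * (q * n) + k * n.
    rewrite Hc2; lia.
  rewrite E.
  have := memk_of c0 _ _ _ Hk HP HQ.
  case: k E Hk {HQ Hc2} => [|[|[|k]]] // _ _ H; rewrite /memb H ?orbT //.
case/or3P=> Hm.
- have [c0 [c1 E]] := memk_wit _ _ Hm.
  exists [:: c0; c1; 0]; split => //; rewrite !big_ord_recr big_ord0 /=.
  congr Posz; lia.
- have [c0 [c1 E]] := memk_wit _ _ Hm.
  exists [:: c0; c1; 1]; split => //; rewrite !big_ord_recr big_ord0 /=.
  congr Posz; lia.
- have [c0 [c1 E]] := memk_wit _ _ Hm.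
  exists [:: c0; c1; 2]; split => //; rewrite !big_ord_recr big_ord0 /=.
  congr Posz; lia.
Qed.

End S.

Local Open Scope ring_scope.

Theorem corollary3 (alpha n : nat) :
  ~~ (3 %| n)%N -> (6 * alpha + 3 < n)%N ->
  let S := in_semigroup [:: 6%N; (6 * alpha + 3)%N; n] in
  let beta2 : rat := (12 * alpha + 6)%N%:R in
  let beta3 : rat := (3 * n)%N%:R in
  (exists f : int, is_frobenius S f /\
     (f%:~R : rat) = (beta2 + beta3) / 2%:R - (12%:R - n%:R) / 2%:R) /\
  (exists g : nat, is_genus S g /\
     (g%:R : rat) = (beta2 + beta3) / 4%:R + (n%:R - 10%:R) / 4%:R).
Proof.
move=> H3 Hn S beta2 beta3.
set F := (2 * n + 6 * alpha - 3)%N.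
have Smem : forall x : nat, S x%:Z <-> memb alpha n x := in_semi_memb alpha n H3 Hn.
have Hb2 : beta2 = 12 * alpha%:R + 6 by rewrite /beta2 natrD natrM.
have Hb3 : beta3 = 3 * n%:R by rewrite /beta3 natrM.
split.
  exists (Posz F); split.
    split.
      by move/Smem; apply/negP; apply: (memb_f alpha n H3 Hn).
    case=> [m|m] Hm.
      by apply/Smem; apply: (memb_big alpha n H3 Hn); rewrite -ltz_nat.
    exfalso; move: Hm; rewrite NegzE; lia.
  have h : (F + 3 = 2 * n + 6 * alpha)%N by rewrite /F; lia.
  have h' : ((F + 3)%N%:R : rat) = (2 * n + 6 * alpha)%N%:R by rewrite h.
  rewrite natrD (natrD _ (2 * n)%N) !natrM in h'.
  rewrite Hb2 Hb3 pmulrn.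
  lra.
have Hsym := memb_sym alpha n H3 Hn.
have Hbig := memb_big alpha n H3 Hn.
have Hcnt : (count (predC (memb alpha n)) (iota 0 F.+1) = n + 3 * alpha - 1)%N.
  have E1 := count_refl (predC (memb alpha n)) F.
  have E2 : count (fun x => (predC (memb alpha n)) (F - x)%N) (iota 0 F.+1)
          = count (memb alpha n) (iota 0 F.+1).
    apply: eq_in_count => x; rewrite mem_iota /= => Hx.
    by rewrite Hsym ?negbK //; rewrite -ltnS.
  have E3 := count_predC (memb alpha n) (iota 0 F.+1).
  rewrite size_iota in E3.
  rewrite /F in E1 E2 E3 *; lia.
exists (n + 3 * alpha - 1)%N; split.
  exists [seq x <- iota 0 F.+1 | ~~ memb alpha n x]; split.
    by rewrite filter_uniq // iota_uniq.
  split; last by rewrite size_filter.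
  move=> m; rewrite mem_filter mem_iota add0n; split.
    case/andP=> Hm Hr; split.
      by case: m Hm {Hr} => // _; rewrite (negbTE _ (memb0 alpha n)).
    by move/Smem; apply/negP.
  case=> Hm Hr; apply/andP; split.
    by apply/negP => /Smem.
  rewrite leq0n /= ltnS leqNgt; apply/negP => Hlt; apply: Hr; apply/Smem; exact: (Hbig m Hlt).
have h : (n + 3 * alpha - 1 + 1 = n + 3 * alpha)%N by lia.
have h' : ((n + 3 * alpha - 1 + 1)%N%:R : rat) = (n + 3 * alpha)%N%:R by rewrite h.
rewrite natrD (natrD _ n) !natrM in h'.
rewrite Hb2 Hb3.
lra.
Qed.
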